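(* Let $\mathbb K$ be a field with $\operatorname{char}(\mathbb K)=0$, $n\ge2$, and $\mathcal G_n$, $z_e$ as in the context. If $f\in A_{\mathbb K}(\mathcal G_n)$ satisfies $f(z_e)\neq0$, then $\operatorname{supp}(f)=\{x\in\mathcal G_n:f(x)\neq0\}$ has nonempty interior; thus $f\notin S_{\mathbb K}(\mathcal G_n)$.
   Context: Let $X=\{\mathbf 0,\mathbf 1\}$, $X^*$ the finite words (with empty word $\varnothing$), $X^\omega$ the infinite words, $C(\eta)=\{\eta w:w\in X^\omega\}$, $\mathbf 1^\infty$ the infinite word of ones. Fix $n\ge2$, a primitive polynomial $f_n$ of degree $n$ over $\mathbb F_2$ with root $\alpha$, and $\operatorname{Tr}(\beta)=\beta+\beta^2+\dots+\beta^{2^{n-1}}\in\mathbb F_2$. $\mathfrak G_n$ is the group of automorphisms of the binary rooted tree $X^*$ generated by $a$ ($a\cdot(\mathbf 0w)=\mathbf 1w$, $a\cdot(\mathbf 1w)=\mathbf 0w$) and $\iota_n(\beta)$, $\beta\in\mathbb F_{2^n}$, where $\iota_n(\beta)\cdot(\mathbf 0w)=\mathbf 0(a^{\operatorname{Tr}(\beta)}\cdot w)$, $\iota_n(\beta)\cdot(\mathbf 1w)=\mathbf 1(\iota_n(\alpha\beta)\cdot w)$; restrictions $g|_x$ are given by $g\cdot(xw)=(g\cdot x)(g|_x\cdot w)$; $e$ is the identity. $\mathcal G_n$ is the groupoid of germs of the action of the inverse semigroup $\{(\eta,g,\mu)\}\cup\{0\}$ on $X^\omega$ with $(\eta,g,\mu):C(\mu)\to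 C(\eta)$, $\mu w\mapsto\eta(g\cdot w)$; germs $[(\eta,g,\mu),w]$, $w\in C(\mu)$, with $[(\eta,g,\mu),w]=[(\eta',g',\mu'),w']$ iff $w=w'$ and some finite prefix $\nu=\mu\epsilon=\mu'\epsilon'$ of $w$ satisfies $\eta(g\cdot\epsilon)=\eta'(g'\cdot\epsilon')$ and $g|_\epsilon=g'|_{\epsilon'}$; basic open bisections $\{[s,w]:w\in U\}$. $z_e=[(\varnothing,e,\varnothing),\mathbf 1^\infty]$. $A_{\mathbb K}(\mathcal G_n)$ is the Steinberg algebra (the $\mathbb K$-span of characteristic functions of compact open bisections), and $S_{\mathbb K}(\mathcal G_n)$ is its ideal of singular functions: $f=\sum_i c_i1_{S_i}$ with each $S_i$ relatively closed in an open bisection and of empty interior (equivalently, $\operatorname{supp}(f)$ has empty interior). *)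

(* Defs.v *)
From mathcomp Require Import all_boot all_order all_algebra.
From Stdlib Require List.
Set Implicit Arguments. Unset Strict Implicit. Unset Printing Implicit Defensive.
Import GRing.Theory.
Local Open Scope ring_scope.

(* X = bool (false = letter 0, true = letter 1); X^* = seq bool;
   X^omega = nat -> bool.  Tree automorphisms are represented by their
   action on finite words, seq bool -> seq bool. *)

Definition word := seq bool.
Definition iword := nat -> bool.

Definition pref (w : iword) (k : nat) : word := mkseq w k.
Definition in_cyl (mu : word) (w : iword) : Prop := pref w (size mu) = mu.
Definition ishift (w : iword) (k : nat) : iword := fun i => w (k + i).
Definition actw (g : word -> word) (w : iword) : iword :=
  fun k => nth false (g (pref w k.+1)) k.
Definition icat (eta : word) (w : iword) : iword :=
  fun k => if (k < size eta)%N then nth false eta k else w (k - size eta)%N.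
(* restriction g|_eps : g.(eps u) = (g.eps)(g|_eps . u) *)
Definition restr (g : word -> word) (eps : word) : word -> word :=
  fun u => drop (size eps) (g (eps ++ u)).

Definition acta (w : word) : word :=
  match w with [::] => [::] | b :: w' => (~~ b) :: w' end.

(* trace F_{2^n} -> F_2 (values 0 or 1 in L when char L = 2) *)
Definition tr (L : fieldType) (n : nat) (b : L) : L := \sum_(i < n) b ^+ (2 ^ i).

Fixpoint iota (L : fieldType) (n : nat) (alpha : L) (beta : L) (w : word)
  {struct w} : word :=
  match w with
  | [::] => [::]
  | false :: w' => false :: (if tr n beta == 1 then acta w' else w')
  | true :: w' => true :: iota n alpha (alpha * beta) w'
  end.

Inductive inG (L : fieldType) (n : nat) (alpha : L) : (word -> word) -> Prop :=
  | G_id : inG n alpha id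
  | G_a : inG n alpha acta
  | G_iota (beta : L) : inG n alpha (iota n alpha beta)
  | G_comp g h : inG n alpha g -> inG n alpha h -> inG n alpha (g \o h)
  | G_inv g h : inG n alpha g -> (forall u, h (g u) = u) ->
                 (forall u, g (h u) = u) -> inG n alpha h
  | G_ext g h : inG n alpha g -> (forall u, g u = h u) -> inG n alpha h.

(* representatives [(eta, g, mu), w] of germs *)
Record germ := Germ { g_eta : word; g_g : word -> word; g_mu : word; g_w : iword }.

Section Groupoid.
Variable Gp : (word -> word) -> Prop.

Definition is_germ (x : germ) : Prop := Gp (g_g x) /\ in_cyl (g_mu x) (g_w x).

Definition src (x : germ) : iword := g_w x.
Definition rng (x : germ) : iword :=
  icat (g_eta x) (actw (g_g x) (ishift (g_w x) (size (g_mu x)))).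

Definition germ_eq (x y : germ) : Prop :=
  (forall k, g_w x k = g_w y k) /\
  exists k, (size (g_mu x) <= k)%N /\ (size (g_mu y) <= k)%N /\
    let nu := pref (g_w x) k in
    let e1 := drop (size (g_mu x)) nu in
    let e2 := drop (size (g_mu y)) nu in
    g_eta x ++ g_g x e1 = g_eta y ++ g_g y e2 /\
    (forall u, restr (g_g x) e1 u = restr (g_g y) e2 u).

Definition gset := germ -> Prop.

Definition saturated (B : gset) : Prop :=
  (forall x, B x -> is_germ x) /\
  (forall x y, B x -> is_germ y -> germ_eq x y -> B y).

(* basic open set {[ (eta,g,mu), w ] : w in C(nu)}, mu a prefix of nu *)
Definition basic (eta : word) (g : word -> word) (mu nu : word) : gset :=
  fun y => is_germ y /\ exists w, in_cyl nu w /\ germ_eq y (Germ eta g mu w).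

Definition gopen (O : gset) : Prop :=
  saturated O /\
  forall x, O x -> exists eta g mu nu, Gp g /\ prefix mu nu /\
     basic eta g mu nu x /\ (forall y, basic eta g mu nu y -> O y).

Definition gcompact (B : gset) : Prop :=
  forall (I : Type) (O : I -> gset), (forall i, gopen (O i)) ->
    (forall x, B x -> exists i, O i x) ->
    exists s : list I, forall x, B x -> exists i, List.In i s /\ O i x.

Definition bisection (B : gset) : Prop :=
  forall x y, B x -> B y ->
    ((forall k, src x k = src y k) -> germ_eq x y) /\
    ((forall k, rng x k = rng y k) -> germ_eq x y).

Definition cob (B : gset) : Prop := gopen B /\ gcompact B /\ bisection B.

Definition inSteinberg (K : fieldType) (f : germ -> K) : Prop :=
  exists (m : nat) (c : 'I_m -> K) (B : 'I_m -> germ -> bool),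
    (forall i, cob (fun x => B i x)) /\
    (forall x, f x = \sum_(i < m) c i * (B i x)%:R).

Definition supp (K : fieldType) (f : germ -> K) : gset :=
  fun x => is_germ x /\ f x != 0.

Definition nonempty_interior (S : gset) : Prop :=
  exists O, gopen O /\ (exists x, O x) /\ (forall x, O x -> S x).

Definition singular (K : fieldType) (f : germ -> K) : Prop :=
  inSteinberg f /\ ~ nonempty_interior (supp f).

End Groupoid.

Definition z_e : germ := Germ [::] id [::] (fun _ => true).

(* Main.v *)
Require Import Defs.
From mathcomp Require Import all_boot all_order all_algebra finfield.
From Stdlib Require Import Classical.
Set Implicit Arguments. Unset Strict Implicit. Unset Printing Implicit Defensive.
Import GRing.Theory.
Local Open Scope ring_scope.
Notation iotaL := Defs.iota.

Lemma tr0 (L : fieldType) (n : nat) : tr n (0 : L) = 0.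
Proof. by rewrite /tr big1 // => i _; rewrite expr0n expn_eq0. Qed.

Lemma frob2 (L : fieldType) (h2 : (2 \in [pchar L])%N) (x y : L) (i : nat) :
  (x + y) ^+ (2 ^ i) = x ^+ (2 ^ i) + y ^+ (2 ^ i).
Proof.
elim: i => [|i IH]; first by rewrite !expn0 !expr1.
rewrite expnSr !exprM IH sqrrD -mulr_natr (pcharf0 h2) mulr0 addr0.
by [].
Qed.

Lemma tr_add (L : fieldType) (h2 : (2 \in [pchar L])%N) n (x y : L) :
  tr n (x + y) = tr n x + tr n y.
Proof. by rewrite /tr -big_split /=; apply: eq_bigr => i _; rewrite frob2. Qed.

Lemma tr_sq (L : finFieldType) (h2 : (2 \in [pchar L])%N) n
  (hL : #|L| = (2 ^ n)%N) (hn : (0 < n)%N) (x : L) :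
  tr n x ^+ 2 = tr n x.
Proof.
have hm : {morph (fun z : L => z ^+ 2) : a b / a + b >-> a + b}.
  by move=> a b; have := frob2 h2 a b 1; rewrite expn1.
rewrite /tr (big_morph _ hm (expr0n _ 2)) /=.
case: n hL hn => [//|n] hL _.
rewrite big_ord_recr big_ord_recl /= expn0 expr1.
rewrite -exprM -expnSr -hL expf_card addrC; congr (_ + _).
by apply: eq_bigr => i _; rewrite -exprM -expnSr.
Qed.

Lemma tr01 (L : finFieldType) (h2 : (2 \in [pchar L])%N) n
  (hL : #|L| = (2 ^ n)%N) (hn : (0 < n)%N) (x : L) :
  tr n x = 0 \/ tr n x = 1.
Proof.
have := tr_sq h2 hL hn x; set t := tr n x => ht.
have : t * (t - 1) = 0 by rewrite mulrBr mulr1 -expr2 ht subrr.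
move/eqP; rewrite mulf_eq0 subr_eq0 => /orP [] /eqP; tauto.
Qed.

Definition fl (t : bool) (w : word) : word := if t then acta w else w.

Lemma acta_size w : size (acta w) = size w. Proof. by case: w. Qed.
Lemma actaK w : acta (acta w) = w. Proof. by case: w => //= b w; rewrite negbK. Qed.
Lemma acta_cat u v : u != [::] -> acta (u ++ v) = acta u ++ v.
Proof. by case: u. Qed.

Lemma iota_nil (L : fieldType) n (a b : L) : iotaL n a b [::] = [::].
Proof. by []. Qed.

Lemma iota_ones (L : fieldType) n (a b : L) j y :
  iotaL n a b (nseq j true ++ y) = nseq j true ++ iotaL n a (a ^+ j * b) y.
Proof.
elim: j b => [|j IH] b /=; first by rewrite expr0 mul1r.
by rewrite IH exprSr mulrA.
Qed.

Lemma iota_false (L : fieldType) n (a b : L) r :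
  iotaL n a b (false :: r) = false :: fl (tr n b == 1) r.
Proof. by []. Qed.

Lemma iota_size (L : fieldType) n (a b : L) u : size (iotaL n a b u) = size u.
Proof.
elim: u b => [|[] u IH] b //=; first by rewrite IH.
by case: ifP => _ //; rewrite acta_size.
Qed.

Lemma iota_take (L : fieldType) n (a b : L) u v :
  take (size u) (iotaL n a b (u ++ v)) = iotaL n a b u.
Proof.
elim: u b => [|[] u IH] b /=; [by rewrite take0 | by rewrite IH |].
case: ifP => _ //; last by rewrite take_size_cat.
case: u {IH} => [|c u] /=; [by case: v | by rewrite take_size_cat].
Qed.

Lemma iota0 (L : fieldType) n (a : L) u : iotaL n a 0 u = u.
Proof.
elim: u => [|[] u IH] //=; first by rewrite mulr0 IH.
by rewrite tr0 eq_sym oner_eq0.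
Qed.

Lemma iota_add (L : finFieldType) (h2 : (2 \in [pchar L])%N) n
  (hL : #|L| = (2 ^ n)%N) (hn : (0 < n)%N) (a b c : L) u :
  iotaL n a b (iotaL n a c u) = iotaL n a (b + c) u.
Proof.
elim: u b c => [|[] u IH] b c //=; first by rewrite IH mulrDr.
rewrite tr_add //.
have h10 : (1 : L) != 0 by rewrite oner_eq0.
have h11 : (1 + 1 : L) = 0 by rewrite -[1 + 1]/(2%:R) (pcharf0 h2).
case: (tr01 h2 hL hn b) => ->; case: (tr01 h2 hL hn c) => ->;
  rewrite ?addr0 ?add0r ?h11 ?eqxx ?(negbTE h10) ?(eq_sym 0) ?(negbTE h10) //=.
by rewrite actaK.
Qed.

Lemma iota_inv (L : finFieldType) (h2 : (2 \in [pchar L])%N) n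
  (hL : #|L| = (2 ^ n)%N) (hn : (0 < n)%N) (a b : L) u :
  iotaL n a b (iotaL n a b u) = u.
Proof.
rewrite iota_add // -[b + b]mulr2n -mulr_natr (pcharf0 h2) mulr0.
exact: iota0.
Qed.

Lemma iota_zb (L : fieldType) n (a b : L) u :
  (forall s, tr n (a ^+ s * b) != 1) -> iotaL n a b u = u.
Proof.
elim: u b => [|[] u IH] b hb //=.
  rewrite IH // => s; rewrite mulrA -exprSr; exact: hb.
by have := hb 0%N; rewrite expr0 mul1r => /negbTE ->.
Qed.

Definition gen (L : fieldType) n (a : L) (o : option L) : word -> word :=
  match o with None => acta | Some b => iotaL n a b end.

Fixpoint evals (L : fieldType) n (a : L) (s : seq (option L)) (u : word) : word :=
  match s with [::] => u | o :: s' => gen n a o (evals n a s' u) end.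

Lemma evals_cat (L : fieldType) n (a : L) s1 s2 u :
  evals n a (s1 ++ s2) u = evals n a s1 (evals n a s2 u).
Proof. by elim: s1 => //= o s1 ->. Qed.

Lemma gen_inv (L : finFieldType) (h2 : (2 \in [pchar L])%N) n
  (hL : #|L| = (2 ^ n)%N) (hn : (0 < n)%N) (a : L) o u :
  gen n a o (gen n a o u) = u.
Proof. case: o => [b|] /=; [exact: iota_inv | exact: actaK]. Qed.

Lemma evals_revK (L : finFieldType) (h2 : (2 \in [pchar L])%N) n
  (hL : #|L| = (2 ^ n)%N) (hn : (0 < n)%N) (a : L) s u :
  evals n a s (evals n a (rev s) u) = u.
Proof.
elim: s u => //= o s IH u.
by rewrite rev_cons -cats1 evals_cat /= IH gen_inv.
Qed.

Lemma inG_evals (L : finFieldType) (h2 : (2 \in [pchar L])%N) n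
  (hL : #|L| = (2 ^ n)%N) (hn : (0 < n)%N) (a : L) g :
  inG n a g -> exists s, forall u, g u = evals n a s u.
Proof.
elim=> {g}.
- by exists [::].
- by exists [:: None].
- by move=> b; exists [:: Some b].
- move=> g h _ [s1 H1] _ [s2 H2]; exists (s1 ++ s2) => u.
  by rewrite evals_cat /= H2 H1.
- move=> g h _ [s H] hgh hhg; exists (rev s) => u.
  have e : g (evals n a (rev s) u) = u by rewrite H evals_revK.
  by rewrite -{1}e hgh.
- move=> g h _ [s H] e; exists s => u; by rewrite -e.
Qed.

Lemma evals_size (L : fieldType) n (a : L) s u : size (evals n a s u) = size u.
Proof.
elim: s => //= [[b|]] s IH; by rewrite ?iota_size ?acta_size IH.
Qed.

Lemma gen_take (L : fieldType) n (a : L) o u v :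
  take (size u) (gen n a o (u ++ v)) = gen n a o u.
Proof.
case: o => [b|] /=; first exact: iota_take.
case: u => [|c u] /=; [by case: v | by rewrite take_size_cat].
Qed.

Lemma gen_size (L : fieldType) n (a : L) o u : size (gen n a o u) = size u.
Proof. by case: o => [b|] /=; rewrite ?iota_size ?acta_size. Qed.

Lemma gen_cat (L : fieldType) n (a : L) o u v :
  gen n a o (u ++ v) = gen n a o u ++ drop (size u) (gen n a o (u ++ v)).
Proof. by rewrite -{1}(cat_take_drop (size u) (gen n a o (u ++ v))) gen_take. Qed.

Lemma evals_take (L : fieldType) n (a : L) s u v :
  take (size u) (evals n a s (u ++ v)) = evals n a s u.
Proof.
elim: s => //= [|o s IH]; first by rewrite take_size_cat.
rewrite -{1}(cat_take_drop (size u) (evals n a s (u ++ v))) IH.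
by rewrite -(evals_size n a s u) gen_take.
Qed.

Definition L1prop (L : fieldType) n (a : L) (g : word -> word) :=
  forall p, exists M q b, forall y,
    g (p ++ nseq M true ++ y) = q ++ iotaL n a b y.

Lemma L1_iota (L : fieldType) n (a b : L) : L1prop n a (iotaL n a b).
Proof.
move=> p; elim: p b => [|c p' IH] b; last case: c.
- by exists 0%N, [::], b.
- have [M [q [b' H]]] := IH (a * b).
  by exists M, (true :: q), b' => y /=; rewrite H.
- exists 1%N, (false :: fl (tr n b == 1) (p' ++ [:: true])), 0 => y /=.
  rewrite iota0; congr (_ :: _); rewrite /fl; case: ifP => _ //.
  rewrite -acta_cat; [by rewrite -catA | by case: p' {IH}].
  by rewrite -catA.
Qed.

Lemma L1_acta (L : fieldType) n (a : L) : L1prop n a acta.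
Proof.
move=> p; exists 1%N, (acta (p ++ [:: true])), 0 => y.
by rewrite iota0 -acta_cat ?catA //; case: p.
Qed.

Lemma L1_evals (L : finFieldType) (h2 : (2 \in [pchar L])%N) n
  (hL : #|L| = (2 ^ n)%N) (hn : (0 < n)%N) (a : L) s :
  L1prop n a (evals n a s).
Proof.
elim: s => [|o s IH] p /=.
  by exists 0%N, p, 0 => y; rewrite iota0.
have [M1 [q1 [b1 H1]]] := IH p.
have Lo : L1prop n a (gen n a o) by case: o => [b|]; [exact: L1_iota | exact: L1_acta].
have [M2 [q2 [b2 H2]]] := Lo q1.
exists (M1 + M2)%N, q2, (b2 + a ^+ M2 * b1) => y.
by rewrite nseqD -catA H1 iota_ones H2 iota_add.
Qed.

Lemma size_pref w k : size (pref w k) = k.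
Proof. by rewrite /pref size_mkseq. Qed.

Lemma pref_add w a b : pref w (a + b) = pref w a ++ pref (ishift w a) b.
Proof.
rewrite /pref /mkseq iotaD map_cat add0n; congr (_ ++ _).
by rewrite -[in iota a _](addn0 a) iotaDl -map_comp.
Qed.

Lemma pref_take w a b : (a <= b)%N -> take a (pref w b) = pref w a.
Proof.
move=> hab; rewrite -(subnKC hab) pref_add.
by rewrite -{1}(size_pref w a) take_size_cat.
Qed.

Lemma pref_eq w w' k : (forall i, w i = w' i) -> pref w k = pref w' k.
Proof. by move=> h; apply: eq_mkseq. Qed.

Lemma pref_S w k : pref w k.+1 = pref w k ++ [:: w k].
Proof. by rewrite -addn1 pref_add /pref /mkseq /= /ishift addr0. Qed.

Lemma drop_cat_le (T : Type) n (s1 s2 : seq T) :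
  (n <= size s1)%N -> drop n (s1 ++ s2) = drop n s1 ++ s2.
Proof.
rewrite drop_cat leq_eqVlt => /orP [/eqP ->|-> //].
by rewrite ltnn subnn drop0 drop_size.
Qed.

Definition good (g : word -> word) :=
  forall u v, take (size u) (g (u ++ v)) = g u.

Lemma good_cat g u v : good g -> g (u ++ v) = g u ++ restr g u v.
Proof. by move=> hg; rewrite /restr -{1}(cat_take_drop (size u) (g (u ++ v))) hg. Qed.

Lemma good_restr g e s u :
  restr g (e ++ s) u = drop (size s) (restr g e (s ++ u)).
Proof. by rewrite /restr size_cat -catA drop_drop addnC. Qed.

Definition gek (x y : germ) k :=
  (size (g_mu x) <= k)%N /\ (size (g_mu y) <= k)%N /\
  g_eta x ++ g_g x (drop (size (g_mu x)) (pref (g_w x) k)) =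
  g_eta y ++ g_g y (drop (size (g_mu y)) (pref (g_w x) k)) /\
  (forall u, restr (g_g x) (drop (size (g_mu x)) (pref (g_w x) k)) u =
             restr (g_g y) (drop (size (g_mu y)) (pref (g_w x) k)) u).

Lemma germ_eqE x y : germ_eq x y <-> (forall k, g_w x k = g_w y k) /\ exists k, gek x y k.
Proof. by []. Qed.

Lemma gek_ext x y k d : good (g_g x) -> good (g_g y) -> gek x y k -> gek x y (k + d).
Proof.
move=> gx gy [h1 [h2 [h3 h4]]]; rewrite /gek pref_add.
set s := pref _ d.
have l1 : (size (g_mu x) <= size (pref (g_w x) k))%N by rewrite size_pref.
have l2 : (size (g_mu y) <= size (pref (g_w x) k))%N by rewrite size_pref.
rewrite !drop_cat_le //.
split; first exact: leq_trans h1 (leq_addr _ _).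
split; first exact: leq_trans h2 (leq_addr _ _).
split.
  by rewrite (good_cat _ _ gx) (good_cat _ _ gy) !catA h3 h4.
by move=> u; rewrite !good_restr h4.
Qed.

Lemma gek_ge x y k k' : good (g_g x) -> good (g_g y) -> gek x y k -> (k <= k')%N -> gek x y k'.
Proof. by move=> gx gy h hk; rewrite -(subnKC hk); apply: gek_ext. Qed.

Lemma germ_eq_refl x : germ_eq x x.
Proof. split=> // ; exists (size (g_mu x)); by split. Qed.

Lemma germ_eq_sym x y : germ_eq x y -> germ_eq y x.
Proof.
move=> [hw [k [h1 [h2 [h3 h4]]]]]; split=> [i|]; first by rewrite hw.
exists k; rewrite /= -(pref_eq k hw).
do 3 (split; first by []).
by move=> u; rewrite h4.
Qed.

Lemma germ_eq_trans x y z : good (g_g x) -> good (g_g y) -> good (g_g z) ->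
  germ_eq x y -> germ_eq y z -> germ_eq x z.
Proof.
move=> gx gy gz [hw1 [k1 e1]] [hw2 [k2 e2]].
split=> [i|]; first by rewrite hw1 hw2.
have {}e1 := gek_ge gx gy e1 (leq_maxl k1 k2).
have {}e2 := gek_ge gy gz e2 (leq_maxr k1 k2).
exists (maxn k1 k2).
move: e1 e2; rewrite /gek -(pref_eq _ hw1) => [[a1 [a2 [a3 a4]]] [b1 [b2 [b3 b4]]]].
split=> //; split=> //; split; first by rewrite a3 b3.
by move=> u; rewrite a4 b4.
Qed.

Definition Ggood (Gp : (word -> word) -> Prop) := forall g, Gp g -> good g.

Lemma basic_open Gp eta g mu nu : Ggood Gp -> Gp g -> prefix mu nu ->
  gopen Gp (basic Gp eta g mu nu).
Proof.
move=> HG hg hp; split; last first.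
  by move=> x hx; exists eta, g, mu, nu.
split; first by move=> x [].
move=> y y' [hy [w [hw he]]] hy' hyy'; split=> //; exists w; split=> //.
apply: germ_eq_trans (germ_eq_sym hyy') he.
- exact: HG (proj1 hy').
- exact: HG (proj1 hy).
- exact: HG.
Qed.

Lemma sat_eq Gp (B : germ -> bool) x y : saturated Gp (fun z => B z) ->
  is_germ Gp x -> is_germ Gp y -> germ_eq x y -> B x = B y.
Proof.
move=> [_ hs] hx hy hxy; apply/idP/idP => h.
  exact: hs h hy hxy.
exact: hs h hx (germ_eq_sym hxy).
Qed.

Lemma In_le_foldr (i : nat) s : List.In i s -> (i <= foldr maxn 0%N s)%N.
Proof.
elim: s => //= j s IH [->|/IH h]; first exact: leq_maxl.
exact: leq_trans h (leq_maxr _ _).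
Qed.

Lemma avoid_ones Gp (B : germ -> bool) : Ggood Gp ->
  (forall x, B x -> is_germ Gp x) ->
  gcompact Gp (fun z => B z) ->
  ~ (exists x, B x /\ forall k, src x k = true) ->
  exists K, forall x, B x -> pref (src x) K != nseq K true.
Proof.
move=> HG hB hc hno.
pose O k : gset := fun y => is_germ Gp y /\ pref (src y) k != nseq k true.
have hO : forall k, gopen Gp (O k).
  move=> k; split.
    split; first by move=> x [].
    move=> y y' [_ hy] hy' [hw _]; split=> //.
    by rewrite /src -(pref_eq _ hw).
  move=> [eta g mu w] [[hg hmu] hk] /=.
  pose N := maxn k (size mu).
  exists eta, g, mu, (pref w N); split=> //.
  split.
    rewrite prefixE; apply/eqP; rewrite pref_take ?leq_maxr //.
  split.
    split=> //; exists w; split; first by rewrite /in_cyl size_pref.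
    exact: germ_eq_refl.
  move=> y [hy [w' [hw' hyw]]]; split=> //.
  move: hyw => [hw _]; rewrite /src (pref_eq _ hw) /=.
  rewrite -(pref_take w' (leq_maxl k (size mu))) -/N.
  move: hw'; rewrite /in_cyl size_pref => ->.
  by rewrite pref_take ?leq_maxl.
have hcov : forall x, B x -> exists k, O k x.
  move=> x hx.
  have [k hk] : exists k, src x k = false.
    apply: NNPP => hn; apply: hno; exists x; split=> // k.
    by case E: (src x k) => //; case: hn; exists k.
  exists k.+1; split; first exact: hB.
  apply/eqP => he.
  have := congr1 (fun s => nth false s k) he.
  by rewrite /pref nth_mkseq // nth_nseq ltnSn hk.
have [s hs] := hc nat O hO hcov.
exists (foldr maxn 0%N s) => x hx; apply/eqP => he.
have [i [hi [_ hOi]]] := hs x hx.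
have hle : (i <= foldr maxn 0%N s)%N by apply: In_le_foldr.
move: hOi; rewrite -(pref_take _ hle) he take_nseq // eqxx.
by [].
Qed.

Definition HypL (L : finFieldType) n (alpha : L) :=
  [/\ (2 \in [pchar L])%N, #|L| = (2 ^ n)%N, (2 <= n)%N & (2 ^ n).-1.-primitive_root alpha].

Lemma inG_good (L : finFieldType) n (alpha : L) : HypL n alpha -> Ggood (inG n alpha).
Proof.
move=> [h2 hL hn _] g hg u v.
have [s hs] := inG_evals h2 hL (ltnW hn) hg.
by rewrite !hs evals_take.
Qed.

Lemma inG_size (L : finFieldType) n (alpha : L) g u : HypL n alpha -> inG n alpha g ->
  size (g u) = size u.
Proof.
move=> [h2 hL hn _] hg.
have [s hs] := inG_evals h2 hL (ltnW hn) hg.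
by rewrite hs evals_size.
Qed.

Lemma inG_L1 (L : finFieldType) n (alpha : L) g : HypL n alpha -> inG n alpha g ->
  exists M q b, size q = M /\ forall y,
    g (nseq M true ++ y) = q ++ iotaL n alpha b y.
Proof.
move=> H hg; have [h2 hL hn _] := H.
have [s hs] := inG_evals h2 hL (ltnW hn) hg.
have [M [q [b hq]]] := L1_evals h2 hL (ltnW hn) alpha s [::].
exists M, q, b; split; last by move=> y; rewrite hs hq.
have := inG_size (nseq M true) H hg; rewrite hs /= -{1}[nseq M true]cats0 hq /= cats0.
by rewrite size_nseq.
Qed.

Lemma restr_L1 (L : fieldType) n (alpha : L) g M q b Y u :
  size q = M -> (forall y, g (nseq M true ++ y) = q ++ iotaL n alpha b y) ->
  restr g (nseq M true ++ Y) u = restr (iotaL n alpha b) Y u.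
Proof.
move=> hs hq; rewrite /restr -catA hq size_cat size_nseq addnC -drop_drop.
by rewrite -hs drop_size_cat.
Qed.

Lemma restr_ones (L : fieldType) n (alpha b : L) j Y u :
  restr (iotaL n alpha b) (nseq j true ++ Y) u = restr (iotaL n alpha (alpha ^+ j * b)) Y u.
Proof.
rewrite /restr -catA iota_ones size_cat size_nseq addnC -drop_drop.
by rewrite -{1}(size_nseq j true) drop_size_cat.
Qed.

Lemma fl_cons b c r : fl b (c :: r) = (if b then ~~ c else c) :: r.
Proof. by case: b. Qed.

Lemma restr_false (L : fieldType) n (alpha b : L) c r u :
  restr (iotaL n alpha b) (false :: c :: r) u = u.
Proof. by rewrite /restr /=; case: ifP => _ /=; rewrite drop_size_cat. Qed.

Lemma restr_fl b c r u : restr (fl b) (c :: r) u = u.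
Proof. by rewrite /restr /= fl_cons /= drop_size_cat. Qed.

Lemma pref_all1 k : pref (fun _ => true) k = nseq k true.
Proof.
apply: (@eq_from_nth _ false); first by rewrite size_pref size_nseq.
by move=> i; rewrite size_pref => hi; rewrite /pref nth_mkseq // nth_nseq hi.
Qed.

Lemma cat_false_inj (A A' U U' : word) :
  A ++ false :: U = A' ++ false :: U' -> size U = size U' -> A = A' /\ U = U'.
Proof.
move=> he hs.
have hA : size A = size A'.
  by have := congr1 size he; rewrite !size_cat /= hs => /eqP; rewrite eqn_add2r => /eqP.
have e1 := congr1 (take (size A)) he.
rewrite take_size_cat // hA take_size_cat // in e1.
split=> //; move: he; rewrite e1 => /eqP; rewrite eqseq_cat // => /andP [_ /eqP [->]] //.
Qed.

Definition EK K : word := nseq K true ++ [:: false].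
Definition zbb (L : finFieldType) n (alpha : L) (b : L) : bool :=
  [forall s : 'I_(2 ^ n).-1, tr n (alpha ^+ s * b) != 1].

Lemma zbbP (L : finFieldType) n (alpha : L) b : HypL n alpha ->
  reflect (forall s, tr n (alpha ^+ s * b) != 1) (zbb n alpha b).
Proof.
move=> [_ _ hn hp]; have hN : (0 < (2 ^ n).-1)%N.
  by rewrite -ltnS prednK ?expn_gt0 // (@leq_trans (2 ^ 2)) // leq_exp2l.
apply: (iffP forallP) => h s; last exact: h.
by rewrite -(prim_expr_mod hp) (h (Ordinal (ltn_pmod s hN))).
Qed.

Lemma gekE eta1 g1 mu1 w1 eta2 g2 mu2 w2 k :
  gek (Germ eta1 g1 mu1 w1) (Germ eta2 g2 mu2 w2) k <->
  [/\ (size mu1 <= k)%N, (size mu2 <= k)%N,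
    eta1 ++ g1 (drop (size mu1) (pref w1 k)) = eta2 ++ g2 (drop (size mu2) (pref w1 k)) &
    (forall u, restr g1 (drop (size mu1) (pref w1 k)) u = restr g2 (drop (size mu2) (pref w1 k)) u)].
Proof. by split; [case=> [? [? [? ?]]] | case]. Qed.

Lemma good_fl b : good (fl b).
Proof.
move=> u v; case: b => /=; last by rewrite take_size_cat.
by case: u => [|c u] /=; [case: v | rewrite take_size_cat].
Qed.

Lemma good_id : good id.
Proof. by move=> u v; rewrite take_size_cat. Qed.

Lemma iota_ones_nil (L : fieldType) n (a b : L) k :
  iotaL n a b (nseq k true) = nseq k true.
Proof. by rewrite -[nseq k true]cats0 iota_ones. Qed.

Lemma size_EK K : size (EK K) = K.+1.
Proof. by rewrite /EK size_cat size_nseq addn1. Qed.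

Lemma GC1 (L : finFieldType) n (alpha : L) g M q bt eta m K b w :
  size q = M -> (forall y, g (nseq M true ++ y) = q ++ iotaL n alpha bt y) ->
  good g -> (m + M <= K)%N -> in_cyl (EK K) w ->
  germ_eq (Germ (EK K) (fl b) (EK K) w) (Germ eta g (nseq m true) w) <->
  (eta ++ q == nseq (m + M) true) &&
  (b == (tr n (alpha ^+ (K - (m + M)) * bt) == 1)).
Proof.
move=> hs hq hg hmK hw.
set j := (K - (m + M))%N; set t := (tr n (alpha ^+ j * bt) == 1).
have hK : K = (m + M + j)%N by rewrite subnKC.
have key : forall c r, drop m (EK K ++ c :: r) =
    nseq M true ++ nseq j true ++ false :: c :: r.
  move=> c r; rewrite /EK -catA {1}hK -addnA nseqD -catA.
  by rewrite (drop_size_cat _ (size_nseq m true)) nseqD -catA.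
have gk : forall c r, g (drop m (EK K ++ c :: r)) =
    q ++ nseq j true ++ false :: fl t (c :: r).
  by move=> c r; rewrite key hq iota_ones.
have rk : forall c r u, restr g (drop m (EK K ++ c :: r)) u = u.
  by move=> c r u; rewrite key (restr_L1 _ _ hs hq) restr_ones restr_false.
have dk : forall c r, drop (size (EK K)) (EK K ++ c :: r) = c :: r.
  by move=> c r; rewrite drop_size_cat.
have hin : pref w K.+1 = EK K by move: hw; rewrite /in_cyl size_EK.
split.
- move=> [_ [k hk]].
  have := @gek_ge (Germ (EK K) (fl b) (EK K) w) (Germ eta g (nseq m true) w) k (K.+1 + k.+1)%N (good_fl b) hg hk (leq_trans (leqnSn k) (leq_addl _ _)).
  move/gekE=> [_ _ he _]; move: he.
  rewrite (pref_add w K.+1 k.+1) hin.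
  case E: (pref (ishift w K.+1) k.+1) => [|c r].
    by move: (size_pref (ishift w K.+1) k.+1); rewrite E.
  rewrite size_nseq dk gk /EK -catA /= !catA => he.
  have hsz' : size (fl b (c :: r)) = size (fl t (c :: r)) by rewrite !fl_cons.
  have [hA hU] := cat_false_inj he hsz'.
  apply/andP; split.
    have hsz : size (eta ++ q) = (m + M)%N.
      have := congr1 size hA; rewrite size_cat !size_nseq hK => /eqP.
      by rewrite eqn_add2r => /eqP <-.
    apply/eqP; have := congr1 (take (m + M)) hA.
    rewrite take_nseq; last by rewrite hK leq_addr.
    by rewrite -hsz take_size_cat // => ->.
  move: hU; rewrite !fl_cons => -[].
  by case: (b); case: (t); case: (c).
- move=> /andP [/eqP heq /eqP hb]; split=> //.
  exists K.+2; apply/gekE; split.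
  + by rewrite size_EK.
  + rewrite size_nseq; apply: leq_trans (leq_addr M m) (leq_trans hmK _).
    by rewrite ltnW.
  + rewrite size_nseq pref_S hin dk gk.
    by rewrite catA heq catA -nseqD -hK /EK -catA hb.
  + by move=> u; rewrite size_nseq pref_S hin dk rk restr_fl.
Qed.

Lemma GC2 (L : finFieldType) n (alpha : L) g M q bt eta m :
  HypL n alpha ->
  size q = M -> (forall y, g (nseq M true ++ y) = q ++ iotaL n alpha bt y) ->
  good g ->
  germ_eq z_e (Germ eta g (nseq m true) (fun _ => true)) <->
  (eta ++ q == nseq (m + M) true) && zbb n alpha bt.
Proof.
move=> H hs hq hg.
have gM : g (nseq M true) = q by rewrite -[nseq M true]cats0 hq cats0.
split.
- move=> [_ [k hk]].
  have := @gek_ge z_e (Germ eta g (nseq m true) (fun _ => true)) k (m + M + k)%N good_id hg hk (leq_addl (m + M) k).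
  move/gekE=> [_ _ he hr]; move: he hr.
  have hd : drop m (nseq (m + M + k) true) = nseq M true ++ nseq k true.
    by rewrite -addnA nseqD (drop_size_cat _ (size_nseq m true)) nseqD.
  rewrite pref_all1 drop0 size_nseq hd hq iota_ones_nil cat0s => he hr.
  have hsz : size (eta ++ q) = (m + M)%N.
    have := congr1 size he; rewrite !size_cat !size_nseq addnA => /eqP.
    by rewrite eqn_add2r => /eqP ->.
  apply/andP; split.
    apply/eqP; have := congr1 (take (m + M)) he.
    rewrite catA -hsz take_size_cat // take_nseq ?leq_addr //.
  apply/(zbbP _ H) => s.
  have {}hr : forall u, u = iotaL n alpha (alpha ^+ k * bt) u.
    move=> u; have := hr u.
    rewrite (restr_L1 _ u hs hq) -[nseq k true]cats0 restr_ones.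
    by rewrite /restr drop_size_cat // drop0.
  have := hr (nseq (s + ((2 ^ n).-1).-1 * k) true ++ [:: false; false]).
  rewrite iota_ones iota_false mulrA -exprD.
  have [_ _ hn hp] := H.
  have hN : (0 < (2 ^ n).-1)%N.
    by rewrite -ltnS prednK ?expn_gt0 // (@leq_trans (2 ^ 2)) // leq_exp2l.
  have ex : alpha ^+ (s + ((2 ^ n).-1).-1 * k + k) = alpha ^+ s.
    rewrite -addnA -mulSnr prednK // mulnC addnC.
    by rewrite -(prim_expr_mod hp) modnMDl (prim_expr_mod hp).
  rewrite ex => /eqP; rewrite eqseq_cat // eqxx /= fl_cons.
  by case: (tr n (alpha ^+ s * bt) == 1).
- move=> /andP [/eqP heq /(zbbP _ H) hz]; split=> //.
  exists (m + M)%N; apply/gekE; split=> //.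
  + by rewrite size_nseq leq_addr.
  + rewrite pref_all1 drop0 size_nseq nseqD (drop_size_cat _ (size_nseq m true)).
    by rewrite gM heq nseqD.
  + move=> u; rewrite pref_all1 drop0 size_nseq nseqD (drop_size_cat _ (size_nseq m true)).
    rewrite -[nseq M true]cats0 (restr_L1 _ u hs hq).
    by rewrite /restr drop_size_cat // drop0 iota_zb.
Qed.

Lemma inG_fl (L : fieldType) n (alpha : L) b : inG n alpha (fl b).
Proof. case: b; [exact: G_ext (G_a _ _) _ | exact: G_ext (G_id _ _) _]. Qed.

Lemma in_cyl_EK K w k : in_cyl (EK K) w -> (k <= K)%N -> pref w k = nseq k true.
Proof.
move=> hw hk; rewrite -(pref_take w (leq_trans hk (leqnSn K))).
move: hw; rewrite /in_cyl size_EK => ->.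
by rewrite /EK takel_cat ?size_nseq // take_nseq.
Qed.

Lemma is_germ_X (L : fieldType) n (alpha : L) K b w : in_cyl (EK K) w ->
  is_germ (inG n alpha) (Germ (EK K) (fl b) (EK K) w).
Proof. by move=> hw; split=> //; exact: inG_fl. Qed.

Lemma is_germ_ze (L : fieldType) n (alpha : L) : is_germ (inG n alpha) z_e.
Proof. by split=> //; exact: G_id. Qed.

Lemma per_i (L : finFieldType) n (alpha : L) (B : germ -> bool) :
  HypL n alpha -> cob (inG n alpha) (fun z => B z) ->
  exists (dl : bool) (Ki d : nat) (bt : L), (d <= Ki)%N /\
  (forall K b w, (Ki <= K)%N -> in_cyl (EK K) w ->
     B (Germ (EK K) (fl b) (EK K) w) = dl && (b == (tr n (alpha ^+ (K - d) * bt) == 1))) /\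
  B z_e = dl && zbb n alpha bt.
Proof.
move=> H [hopen [hcomp hbis]].
have HG := inG_good H.
have [hsat1 hsat2] := proj1 hopen.
case: (classic (exists x, B x /\ forall k, src x k = true)) => [[x [hx hall]]|hno].
- have [eta [g [mu [nu [hg [hpre [hbx hsub]]]]]]] := (proj2 hopen) x hx.
  have [hgx [w0 [hw0 [hxe _]]]] := hbx.
  have hw0t : forall k, w0 k = true by move=> k; have := hxe k => /= <-; exact: hall.
  have hnu : nu = nseq (size nu) true.
    by move: hw0; rewrite /in_cyl (pref_eq _ hw0t) pref_all1 => e; exact: esym e.
  have hmu : mu = nseq (size mu) true.
    have sm := size_prefix hpre.
    move: (hpre); rewrite prefixE => /eqP e.
    by rewrite -{1}e {1}hnu take_nseq.
  move: (size mu) hmu => m hmu; subst mu.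
  have [M [q [bt [hsq hq]]]] := inG_L1 H hg.
  have gg := HG _ hg.
  exists (eta ++ q == nseq (m + M) true), (size nu + (m + M))%N, (m + M)%N, bt.
  split; first exact: leq_addl.
  split.
  + move=> K b w hK hw.
    have hmK : (m + M <= K)%N := leq_trans (leq_addl _ _) hK.
    have hnK : (size nu <= K)%N := leq_trans (leq_addr _ _) hK.
    set X := Germ (EK K) (fl b) (EK K) w.
    set Y := Germ eta g (nseq m true) w.
    have hY : B Y.
      apply: hsub; split.
        split=> //; rewrite /in_cyl size_nseq (in_cyl_EK hw) //.
        exact: leq_trans (leq_addr _ _) hmK.
      exists w; split; last exact: germ_eq_refl.
      by rewrite /in_cyl {2}hnu (in_cyl_EK hw).
    have hGC := GC1 eta b hsq hq gg hmK hw.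
    apply/idP/idP => h.
      by apply/hGC; apply: (proj1 (hbis X Y h hY)).
    apply: hsat2 hY (is_germ_X _ _ _ hw) _.
    by apply: germ_eq_sym; apply/hGC.
  + set Y := Germ eta g (nseq m true) (fun _ => true).
    have hY : B Y.
      apply: hsub; split.
        by split=> //; rewrite /in_cyl size_nseq pref_all1.
      exists (fun _ => true); split; last exact: germ_eq_refl.
      by rewrite /in_cyl {2}hnu pref_all1.
    have hGC := GC2 eta m H hsq hq gg.
    apply/idP/idP => h.
      by apply/hGC; apply: (proj1 (hbis z_e Y h hY)).
    apply: hsat2 hY (is_germ_ze _ _) _.
    by apply: germ_eq_sym; apply/hGC.
- have [K0 hK0] := avoid_ones HG hsat1 hcomp hno.
  exists false, K0, 0%N, 0; split=> //; split.
    move=> K b w hK hw; apply/negbTE/negP => hX.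
    by have := hK0 _ hX; rewrite /src /= (in_cyl_EK hw hK) eqxx.
  apply/negbTE/negP => hz; apply: hno; exists z_e; split=> //.
Qed.

Lemma card_tr1 (L : finFieldType) n (alpha : L) (dt : L) : HypL n alpha ->
  tr n dt = 1 -> #|[set x : L | tr n x == 1]| = (2 ^ n.-1)%N.
Proof.
move=> [h2 hL hn _] hd.
have hn0 : (0 < n)%N by apply: leq_trans hn.
set T1 := [set x : L | tr n x == 1].
have h11 : (1 + 1 : L) = 0 by rewrite -[1 + 1]/(2%:R) (pcharf0 h2).
have h10 : (1 : L) != 0 by rewrite oner_eq0.
have hC : ~: T1 = [set x + dt | x in T1].
  apply/setP => y; rewrite !inE; apply/idP/idP.
    move=> hy; apply/imsetP; exists (y + dt).
      rewrite inE tr_add // hd.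
      by case: (tr01 h2 hL hn0 y) hy => ->; rewrite ?eqxx // add0r.
    by rewrite -addrA -[dt + dt]mulr2n -mulr_natr (pcharf0 h2) mulr0 addr0.
  move=> /imsetP [x]; rewrite inE => /eqP hx ->.
  by rewrite tr_add // hx hd h11 eq_sym (negbTE h10).
have := cardsC T1; rewrite hC card_imset; last exact: addIr.
rewrite hL => h.
move: h; rewrite -(prednK hn0) expnS /= => h; apply/eqP.
by rewrite -(eqn_pmul2l (isT : (0 < 2)%N)) -h mul2n addnn.
Qed.

Lemma count_tr (L : finFieldType) n (alpha : L) bt e : HypL n alpha -> ~~ zbb n alpha bt ->
  #|[set s : 'I_(2 ^ n).-1 | tr n (alpha ^+ (e + s) * bt) == 1]| = (2 ^ n.-1)%N.
Proof.
move=> H hz; have [h2 hL hn hp] := H.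
set N := (2 ^ n).-1.
have hN : (0 < N)%N.
  by rewrite /N -ltnS prednK ?expn_gt0 // (@leq_trans (2 ^ 2)) // leq_exp2l.
have [s0 hs0] : exists s0 : 'I_N, tr n (alpha ^+ s0 * bt) == 1.
  by move/forallPn: hz => [s0]; rewrite negbK; exists s0.
have h10 : (1 : L) != 0 by rewrite oner_eq0.
have hbt : bt != 0.
  by apply: contraTneq hs0 => ->; rewrite mulr0 tr0 eq_sym.
have ha : alpha != 0.
  apply/eqP => ha0; have := prim_expr_order hp; rewrite ha0 expr0n.
  by rewrite -/N (gtn_eqF hN) => /eqP; rewrite eq_sym (negbTE h10).
pose phi (s : 'I_N) := alpha ^+ (e + s) * bt.
have phi_inj : injective phi.
  move=> s s' /(mulIf hbt) /eqP; rewrite !exprD (inj_eq (mulfI (expf_neq0 _ ha))).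
  rewrite (eq_prim_root_expr hp) !modn_small ?ltn_ord // => /eqP; exact: val_inj.
have himg : [set phi s | s : 'I_N] = [set~ 0].
  apply/eqP; rewrite eqEcard cardsC1 hL card_imset // card_ord leqnn andbT.
  apply/subsetP => x /imsetP [s _ ->]; rewrite !inE mulf_eq0 negb_or expf_neq0 //.
rewrite -(card_imset _ phi_inj) -(card_tr1 H (eqP hs0)).
apply: eq_card => x; rewrite [in RHS]inE; apply/imsetP/idP.
  by move=> [s]; rewrite inE => hs ->.
move=> hx.
have : x \in [set~ 0].
  by rewrite !inE; apply: contraTneq hx => ->; rewrite tr0 eq_sym.
rewrite -himg => /imsetP [s _ hs]; exists s => //.
by rewrite inE -/(phi s) -hs.
Qed.

Lemma sum_bool (R : pzSemiRingType) (I : finType) (P : pred I) :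
  \sum_(i : I) ((P i)%:R : R) = (#|[set i | P i]|)%:R.
Proof.
rewrite -sum1dep_card natr_sum [RHS]big_mkcond /=; apply: eq_bigr => i _.
by case: (P i).
Qed.

Lemma w0_cyl K : in_cyl (EK K) (fun i => (i < K)%N).
Proof.
rewrite /in_cyl size_EK; apply: (@eq_from_nth _ false).
  by rewrite size_pref size_EK.
move=> i; rewrite size_pref => hi; rewrite /pref nth_mkseq // /EK nth_cat size_nseq.
case: ltnP => h; first by rewrite nth_nseq h.
have -> : i = K by apply/eqP; rewrite eqn_leq h andbT -ltnS.
by rewrite subnn.

Qed.

Unset Implicit Arguments.

Theorem mainTheorem10 (K : fieldType) (hK : [pchar K] =i pred0)
  (L : finFieldType) (n : nat) (hn : (2 <= n)%N) (hL : #|L| = (2 ^ n)%N)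
  (hL2 : (2 \in [pchar L])%N) (alpha : L)
  (halpha : (2 ^ n).-1.-primitive_root alpha)
  (f : germ -> K) :
  inSteinberg (inG n alpha) f -> f z_e != 0 ->
  nonempty_interior (inG n alpha) (supp (inG n alpha) f) /\
  ~ singular (inG n alpha) f.
Proof.
move=> [m [c [B [hB hf]]]] hz.
have H : HypL n alpha by split.
have HG := inG_good H.
have hall : forall i : 'I_m, exists p : bool * nat * nat * L,
   (p.1.2 <= p.1.1.2)%N /\
   (forall K0 b w, (p.1.1.2 <= K0)%N -> in_cyl (EK K0) w ->
     B i (Germ (EK K0) (fl b) (EK K0) w) =
       p.1.1.1 && (b == (tr n (alpha ^+ (K0 - p.1.2) * p.2) == 1))) /\
   B i z_e = p.1.1.1 && zbb n alpha p.2.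
  move=> i; have [dl [Ki [d [bt hh]]]] := per_i H (hB i).
  by exists (dl, Ki, d, bt).
have [F hF] := fin_all_exists hall.
pose dl i := (F i).1.1.1; pose Ki i := (F i).1.1.2; pose d i := (F i).1.2;
pose bt i := (F i).2.
pose Kmax := (\max_(i < m) Ki i)%N.
have hKi : forall i, (Ki i <= Kmax)%N by move=> i; exact: (leq_bigmax (F := Ki) i).
pose G K0 b := \sum_(i < m) c i *
   (dl i && (b == (tr n (alpha ^+ (K0 - d i) * bt i) == 1)))%:R.
have hfX : forall K0 b w, (Kmax <= K0)%N -> in_cyl (EK K0) w ->
    f (Germ (EK K0) (fl b) (EK K0) w) = G K0 b.
  move=> K0 b w hK0 hw; rewrite hf; apply: eq_bigr => i _.
  by rewrite (proj1 (proj2 (hF i))) // (leq_trans (hKi i) hK0).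
have hfz : f z_e = \sum_(i < m) c i * (dl i && zbb n alpha (bt i))%:R.
  by rewrite hf; apply: eq_bigr => i _; rewrite (proj2 (proj2 (hF i))).
case: (classic (exists K0 b, (Kmax <= K0)%N /\ G K0 b != 0)) => [[K0 [b [hK0 hG]]]|hno].
  have Hint : nonempty_interior (inG n alpha) (supp (inG n alpha) f).
    exists (basic (inG n alpha) (EK K0) (fl b) (EK K0) (EK K0)); split.
      by apply: basic_open => //; [exact: inG_fl | exact: prefix_refl].
    split.
      exists (Germ (EK K0) (fl b) (EK K0) (fun i => (i < K0)%N)).
      split; first exact: is_germ_X (w0_cyl K0).
      exists (fun i => (i < K0)%N); split; [exact: w0_cyl | exact: germ_eq_refl].
    move=> y [hy [w [hw hyX]]]; split=> //.
    have -> : f y = f (Germ (EK K0) (fl b) (EK K0) w).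
      rewrite !hf; apply: eq_bigr => i _.
      by rewrite (@sat_eq _ (B i) y _ (proj1 (proj1 (hB i))) hy (is_germ_X _ _ _ hw) hyX).
    by rewrite hfX.
  by split=> // -[_ hni]; apply: hni.
exfalso; move: hz; apply/negP; rewrite negbK.
have hG0 : forall K0 b, (Kmax <= K0)%N -> G K0 b = 0.
  move=> K0 b hK0; apply/eqP; apply: NNPP => h; apply: hno.
  by exists K0, b; split => //; apply/negP.
pose T := \sum_(i < m) c i * (dl i)%:R.
have hT : T = 0.
  rewrite -(addr0 0) -{1}(hG0 Kmax true (leqnn _)) -(hG0 Kmax false (leqnn _)).
  rewrite /T /G -big_split /=; apply: eq_bigr => i _.
  rewrite -mulrDr -natrD; congr (_ * _%:R).
  by case: (dl i); case: (tr _ _ == 1).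
pose N := (2 ^ n).-1.
have hS : \sum_(s < N) G (Kmax + s)%N true = 0.
  by apply: big1 => s _; apply: hG0; exact: leq_addr.
have hS2 : \sum_(s < N) G (Kmax + s)%N true =
    (T - f z_e) * (2 ^ n.-1)%:R.
  rewrite /G exchange_big /= /T hfz -sumrB mulr_suml; apply: eq_bigr => i _.
  rewrite -mulr_sumr -mulrBr -mulrA; congr (_ * _).
  have hdi : (d i <= Kmax)%N := leq_trans (proj1 (hF i)) (hKi i).
  under eq_bigr => s _ do rewrite (addnC Kmax) -addnBA //.
  case: (dl i) => /=.
    rewrite sum_bool.
    case hzb: (zbb n alpha (bt i)).
      rewrite subrr mul0r; move/(zbbP _ H): hzb => hzb.
      set S := [set _ | _].
      have -> : S = set0 by apply/setP => s; rewrite !inE (negbTE (hzb _)).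
      by rewrite cards0.
    rewrite subr0 mul1r.
    have := count_tr (Kmax - d i)%N H (negbT hzb).
    by move=> <-; congr (_%:R); apply: eq_card => s; rewrite !inE addnC.
  by rewrite subrr mul0r big1.
move: hS; rewrite hS2 hT sub0r mulNr => /eqP; rewrite oppr_eq0 mulf_eq0.
have -> : ((2 ^ n.-1)%:R == 0 :> K) = false.
  by rewrite (proj1 (pcharf0P K) hK) expn_eq0.
by rewrite orbF.
Qed.
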